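(* Let $\sigma>0$ and $1<\theta<\infty$. Then: (i) $w_{\sigma,\theta}$ is continuous with compact support $\mathrm{supp}(w_{\sigma,\theta})\subseteq\mathscr{S}_\theta:=[4,4\zeta(\theta)]$; (ii) $\mathscr{P}_\theta$ is countable and $w_{\sigma,\theta}$ is continuously differentiable on $\mathbb{R}\setminus\mathscr{P}_\theta$, so that $w'_{\sigma,\theta}$ exists a.e.; (iii) $w_{\gamma\sigma,\theta}=(w_{\sigma,\theta})^{\gamma-1}w_{\sigma,\theta}$ for all $\gamma>0$; (iv) $0\leq w_{\sigma,\theta}(\xi)\leq 2^{-\sigma\theta}$ for all $\xi\in\mathbb{R}$.
   Context: For $1<\theta<\infty$ let $a_{n,\theta}:=4\sum_{j=1}^{n-1}j^{-\theta}$ for integers $n\geq2$, so $a_{2,\theta}=4$, $a_{n+1,\theta}=a_{n,\theta}+4n^{-\theta}$ and $a_{\infty,\theta}:=\lim_n a_{n,\theta}=4\zeta(\theta)$ ($\zeta$ the Riemann zeta function). For $\sigma>0$ define $w_{\sigma,\theta}:\mathbb{R}\to[0,\infty)$ on each $[a_{n,\theta},a_{n+1,\theta})$, $n\geq2$, by: $w_{\sigma,\theta}(\xi)=(\xi-a_{n,\theta})^\sigma$ if $a_{n,\theta}\leq\xi<a_{n,\theta}+n^{-\theta}$; $=n^{-\theta\sigma}$ if $a_{n,\theta}+n^{-\theta}\leq\xi<a_{n,\theta}+2n^{-\theta}$; $=(a_{n,\theta}+3n^{-\theta}-\xi)^\sigma$ if $a_{n,\theta}+2n^{-\theta}\leq\xi<a_{n,\theta}+3n^{-\theta}$;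 $=0$ if $a_{n,\theta}+3n^{-\theta}\leq\xi<a_{n+1,\theta}$; and $w_{\sigma,\theta}:=0$ on $\mathbb{R}\setminus[a_{2,\theta},a_{\infty,\theta})$. The set of transition points is $\mathscr{P}_\theta:=\{\xi\in[a_{2,\theta},a_{\infty,\theta}) : \xi=a_{n,\theta}+kn^{-\theta}\text{ for some } n\geq2,\ k\in\{0,1,2,3\}\}\cup\{a_{\infty,\theta}\}$. *)

(* Defs.v *)
From Stdlib Require Import Reals Lra ClassicalEpsilon.
From Coquelicot Require Import Coquelicot.
Open Scope R_scope.

(* Real power with the convention x^s = 0 for x <= 0 (so 0^sigma = 0). *)
Definition rpow (x s : R) : R := if Rle_dec x 0 then 0 else Rpower x s.

Definition npow (n : nat) (e : R) : R := Rpower (INR n) e.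

(* psum theta n = sum_{j=1}^{n-1} j^{-theta} *)
Fixpoint psum (theta : R) (n : nat) : R :=
  match n with
  | O => 0
  | S m => psum theta m + (if Nat.eqb m 0 then 0 else npow m (- theta))
  end.

Definition a (theta : R) (n : nat) : R := 4 * psum theta n.

Definition zeta (theta : R) : R := Series (fun k => npow (S k) (- theta)).

Definition ainf (theta : R) : R := 4 * zeta theta.

Definition piece (sigma theta : R) (n : nat) (xi : R) : R :=
  let an := a theta n in
  let h := npow n (- theta) in
  if Rlt_dec xi (an + h) then rpow (xi - an) sigma
  else if Rlt_dec xi (an + 2 * h) then npow n (- theta * sigma)
  else if Rlt_dec xi (an + 3 * h) then rpow (an + 3 * h - xi) sigma
  else 0.

Definition nsel (theta xi : R) : nat :=
  epsilon (inhabits O)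
    (fun n => (2 <= n)%nat /\ a theta n <= xi < a theta (S n)).

Definition w (sigma theta : R) (xi : R) : R :=
  if Rle_dec (a theta 2) xi then
    if Rlt_dec xi (ainf theta) then piece sigma theta (nsel theta xi) xi else 0
  else 0.

Definition Ptheta (theta : R) (xi : R) : Prop :=
  (a theta 2 <= xi < ainf theta /\
   exists (n k : nat), (2 <= n)%nat /\ (k <= 3)%nat /\
     xi = a theta n + INR k * npow n (- theta))
  \/ xi = ainf theta.

(* closure of {xi | f xi <> 0} *)
Definition in_support (f : R -> R) (xi : R) : Prop :=
  forall eps : R, 0 < eps -> exists y : R, Rabs (y - xi) < eps /\ f y <> 0.

(* Main.v *)
Require Import Defs.
From Stdlib Require Import Reals Lra Lia ClassicalEpsilon.
From Coquelicot Require Import Coquelicot.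
Open Scope R_scope.

Lemma npow_pos n e : 0 < npow n e.
Proof. unfold npow, Rpower. apply exp_pos. Qed.

Lemma npow_1 e : npow 1 e = 1.
Proof. unfold npow, Rpower. simpl. rewrite ln_1, Rmult_0_r. apply exp_0. Qed.

Lemma a_S th n : (1 <= n)%nat -> a th (S n) = a th n + 4 * npow n (- th).
Proof.
  intros Hn. unfold a. simpl. destruct n as [|m]; [lia|]. simpl. ring.
Qed.

Lemma a_0 th : a th 0 = 0. Proof. unfold a; simpl; ring. Qed.
Lemma a_1 th : a th 1 = 0. Proof. unfold a; simpl; ring. Qed.
Lemma a_2 th : a th 2 = 4.
Proof. unfold a; simpl. rewrite npow_1. ring. Qed.

Lemma a_le_S th n : a th n <= a th (S n).
Proof.
  destruct n as [|m]. rewrite a_0, a_1; lra.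
  rewrite (a_S th (S m)) by lia. pose proof (npow_pos (S m) (-th)). lra.
Qed.

Lemma a_mono th n m : (n <= m)%nat -> a th n <= a th m.
Proof.
  induction 1. lra. eapply Rle_trans; [exact IHle|apply a_le_S].
Qed.

Lemma a_lt_S th n : (1 <= n)%nat -> a th n < a th (S n).
Proof. intros H. rewrite a_S by exact H. pose proof (npow_pos n (-th)). lra. Qed.

Lemma a_smono th n m : (1 <= n)%nat -> (n < m)%nat -> a th n < a th m.
Proof.
  intros H1 H2. apply Rlt_le_trans with (a th (S n)). apply a_lt_S; auto.
  apply a_mono; lia.
Qed.
Lemma key_ineq th k : 1 < th -> (1 <= k)%nat ->
  (th - 1) * npow (S k) (- th) <= npow k (1 - th) - npow (S k) (1 - th).
Proof.
  intros Hth Hk. unfold npow, Rpower.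
  assert (Hk0 : 1 <= INR k) by (apply (le_INR 1); exact Hk).
  assert (HS : INR (S k) = INR k + 1) by (rewrite S_INR; ring).
  set (x := ln (INR k)). set (y := ln (INR (S k))).
  assert (Ex : exp x = INR k) by (apply exp_ln; lra).
  assert (Ey : exp y = INR k + 1) by (unfold y; rewrite exp_ln; lra).
  assert (Hxy : exp (x - y) = INR k / (INR k + 1)).
  { unfold Rminus. rewrite exp_plus, exp_Ropp, Ex, Ey. reflexivity. }
  pose proof (exp_ineq1_le (x - y)) as H1. rewrite Hxy in H1.
  assert (Hyx : 1 / (INR k + 1) <= y - x).
  { assert (INR k / (INR k + 1) = 1 - 1/(INR k + 1)) by (field; lra). lra. }
  set (E := exp ((1 - th) * y)).
  assert (HE : 0 < E) by apply exp_pos.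
  assert (E1 : exp (- th * y) = E / (INR k + 1)).
  { replace (- th * y) with ((1 - th) * y + - y) by ring.
    rewrite exp_plus, exp_Ropp, Ey. unfold E. field. lra. }
  assert (E2 : exp ((1 - th) * x) = E * exp ((th - 1) * (y - x))).
  { unfold E. rewrite <- exp_plus. f_equal. ring. }
  pose proof (exp_ineq1_le ((th - 1) * (y - x))) as H2.
  rewrite E1, E2.
  assert (0 < INR k + 1) by lra.
  assert (E * ((th - 1) * (1 / (INR k + 1))) <= E * ((th - 1) * (y - x))).
  { apply Rmult_le_compat_l; [lra|]. apply Rmult_le_compat_l; lra. }
  assert (E * (1 + (th - 1) * (y - x)) <= E * exp ((th - 1) * (y - x))).
  { apply Rmult_le_compat_l; lra. }
  replace ((th - 1) * (E / (INR k + 1))) with (E * ((th - 1) * (1 / (INR k + 1)))) by (field; lra).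
  nra.
Qed.
Lemma psum_S th n : (1 <= n)%nat -> psum th (S n) = psum th n + npow n (- th).
Proof. intros H. simpl. destruct n; [lia|]. simpl. ring. Qed.

Lemma psum_bound th n : 1 < th -> (1 <= n)%nat ->
  (th - 1) * psum th (S n) <= th - npow n (1 - th).
Proof.
  intros Hth. induction 1 as [|m Hm IH].
  - simpl. rewrite !npow_1. lra.
  - rewrite psum_S by lia. pose proof (key_ineq th m Hth Hm). nra.
Qed.

Lemma psum_le th n : 1 < th -> psum th n <= th / (th - 1).
Proof.
  intros Hth. assert (0 < th / (th - 1)) by (apply Rdiv_lt_0_compat; lra).
  destruct n as [|[|m]]. simpl; lra. simpl; lra.
  pose proof (psum_bound th (S m) Hth ltac:(lia)).
  pose proof (npow_pos (S m) (1 - th)).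
  apply Rmult_le_reg_l with (th - 1). lra.
  replace ((th - 1) * (th / (th - 1))) with th by (field; lra). lra.
Qed.

Definition zu th := fun k => npow (S k) (- th).

Lemma sum_zu th n : sum_n (zu th) n = psum th (S (S n)).
Proof.
  induction n as [|n IH].
  - rewrite sum_O. unfold zu. simpl. ring.
  - rewrite sum_Sn, IH. rewrite (psum_S th (S (S n))) by lia. reflexivity.
Qed.

Lemma zeta_series th : 1 < th -> is_series (zu th) (zeta th).
Proof.
  intros Hth.
  assert (Hex : ex_finite_lim_seq (sum_n (zu th))).
  { apply ex_finite_lim_seq_incr with (th / (th - 1)).
    - intros n. rewrite !sum_zu. rewrite (psum_S th (S (S n))) by lia.
      pose proof (npow_pos (S (S n)) (- th)). lra.
    - intros n. rewrite sum_zu. apply psum_le; auto. }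
  destruct Hex as [l Hl].
  assert (Hs : is_series (zu th) l) by exact Hl.
  unfold zeta. fold (zu th). rewrite (is_series_unique _ _ Hs). exact Hs.
Qed.

Lemma psum_lt_zeta th m : 1 < th -> psum th m < zeta th.
Proof.
  intros Hth. pose proof (zeta_series th Hth) as Hs.
  assert (Hinc : forall n, sum_n (zu th) n <= sum_n (zu th) (S n)).
  { intros n. rewrite !sum_zu. rewrite (psum_S th (S (S n))) by lia.
    pose proof (npow_pos (S (S n)) (- th)). lra. }
  pose proof (is_lim_seq_incr_compare _ _ Hs Hinc (S m)) as H.
  rewrite sum_zu in H.
  assert (psum th m <= psum th (S (S m))).
  { pose proof (a_mono th m (S (S m)) ltac:(lia)). unfold a in H0. lra. }
  rewrite (psum_S th (S (S m))) in H by lia.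
  pose proof (npow_pos (S (S m)) (- th)). lra.
Qed.

Lemma a_lt_ainf th m : 1 < th -> a th m < ainf th.
Proof. intros. unfold a, ainf. pose proof (psum_lt_zeta th m H). lra. Qed.

Lemma a_tends th xi : 1 < th -> xi < ainf th -> exists N, xi < a th N.
Proof.
  intros Hth Hxi. pose proof (zeta_series th Hth) as Hs.
  assert (Hl : is_lim_seq (sum_n (zu th)) (zeta th)) by exact Hs.
  apply is_lim_seq_spec in Hl.
  unfold ainf in Hxi.
  assert (He : 0 < zeta th - xi / 4) by lra.
  destruct (Hl (mkposreal _ He)) as [N HN].
  exists (S (S N)). specialize (HN N (Nat.le_refl N)). simpl in HN.
  rewrite sum_zu in HN. unfold a. apply Rabs_def2 in HN. lra.
Qed.

Lemma idx_exists th xi : 1 < th -> a th 2 <= xi < ainf th ->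
  exists n, (2 <= n)%nat /\ a th n <= xi < a th (S n).
Proof.
  intros Hth [H1 H2]. destruct (a_tends th xi Hth H2) as [N HN].
  revert HN. induction N as [|m IH]; intros HN.
  - rewrite a_0 in HN. rewrite a_2 in H1. lra.
  - destruct (Rlt_le_dec xi (a th m)) as [Hl|Hl]. apply IH; auto.
    destruct m as [|[|m]].
    + rewrite a_1 in HN. rewrite a_2 in H1. lra.
    + lra.
    + exists (S (S m)). split; [lia|]. lra.
Qed.

Lemma idx_unique th xi n m : (2 <= n)%nat -> (2 <= m)%nat ->
  a th n <= xi < a th (S n) -> a th m <= xi < a th (S m) -> n = m.
Proof.
  intros Hn Hm [H1 H2] [H3 H4].
  destruct (Nat.lt_trichotomy n m) as [H|[H|H]]; auto.
  - pose proof (a_mono th (S n) m H). lra.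
  - pose proof (a_mono th (S m) n H). lra.
Qed.

Lemma nsel_spec th xi : 1 < th -> a th 2 <= xi < ainf th ->
  (2 <= nsel th xi)%nat /\ a th (nsel th xi) <= xi < a th (S (nsel th xi)).
Proof.
  intros Hth Hxi. unfold nsel. apply epsilon_spec. apply idx_exists; auto.
Qed.

Lemma w_eq s th xi n : 1 < th -> (2 <= n)%nat -> a th n <= xi < a th (S n) ->
  w s th xi = piece s th n xi.
Proof.
  intros Hth Hn Hxi. unfold w.
  pose proof (a_mono th 2 n Hn). pose proof (a_lt_ainf th (S n) Hth).
  destruct (Rle_dec (a th 2) xi); [|lra].
  destruct (Rlt_dec xi (ainf th)); [|lra].
  destruct (nsel_spec th xi Hth ltac:(lra)) as [Hs1 Hs2].
  rewrite (idx_unique th xi (nsel th xi) n Hs1 Hn Hs2 Hxi). reflexivity.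
Qed.

Lemma w_out s th xi : xi < a th 2 \/ ainf th <= xi -> w s th xi = 0.
Proof.
  intros H. unfold w. destruct (Rle_dec (a th 2) xi); auto.
  destruct (Rlt_dec xi (ainf th)); auto. lra.
Qed.

Lemma rpow_pos x s : 0 < x -> rpow x s = Rpower x s.
Proof. intros H. unfold rpow. destruct (Rle_dec x 0); [lra|auto]. Qed.

Lemma rpow_nonpos x s : x <= 0 -> rpow x s = 0.
Proof. intros H. unfold rpow. destruct (Rle_dec x 0); [auto|lra]. Qed.

Lemma piece_min s th n xi :
  piece s th n xi = rpow (Rmin (Rmin (xi - a th n) (npow n (- th)))
                               (a th n + 3 * npow n (- th) - xi)) s.
Proof.
  unfold piece. set (h := npow n (- th)). set (an := a th n).
  assert (Hh : 0 < h) by apply npow_pos.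
  assert (Hm : rpow h s = npow n (- th * s)).
  { rewrite rpow_pos by auto. unfold h, npow. apply Rpower_mult. }
  destruct (Rlt_dec xi (an + h)).
  { f_equal. unfold Rmin. repeat destruct Rle_dec; lra. }
  destruct (Rlt_dec xi (an + 2 * h)).
  { rewrite <- Hm. f_equal. unfold Rmin. repeat destruct Rle_dec; lra. }
  destruct (Rlt_dec xi (an + 3 * h)).
  { f_equal. unfold Rmin. repeat destruct Rle_dec; lra. }
  rewrite rpow_nonpos; auto. unfold Rmin. repeat destruct Rle_dec; lra.
Qed.

Lemma local_rep s th m xi : 1 < th -> (1 <= m)%nat ->
  a th (S m) - npow m (- th) < xi < a th (S (S m)) ->
  w s th xi = piece s th (S m) xi.
Proof.
  intros Hth Hm [H1 H2].
  destruct (Rle_lt_dec (a th (S m)) xi) as [H|H].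
  - apply w_eq; auto. lia.
  - assert (Hp : piece s th (S m) xi = 0).
    { unfold piece. pose proof (npow_pos (S m) (- th)).
      destruct (Rlt_dec xi (a th (S m) + npow (S m) (- th))); [|lra].
      apply rpow_nonpos. lra. }
    rewrite Hp.
    destruct (Rlt_le_dec xi (a th 2)) as [H3|H3].
    + apply w_out. auto.
    + assert (Hm2 : (2 <= m)%nat).
      { destruct m as [|[|m]]; try lia. lra. }
      rewrite (a_S th m) in H1, H by lia.
      rewrite (w_eq s th xi m) by (auto; rewrite (a_S th m) by lia; lra).
      unfold piece. pose proof (npow_pos m (- th)).
      destruct (Rlt_dec xi (a th m + npow m (- th))); [lra|].
      destruct (Rlt_dec xi (a th m + 2 * npow m (- th))); [lra|].
      destruct (Rlt_dec xi (a th m + 3 * npow m (- th))); [lra|]. reflexivity.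
Qed.

Lemma continuous_Rmin_comp (f g : R -> R) x :
  continuous f x -> continuous g x -> continuous (fun y => Rmin (f y) (g y)) x.
Proof.
  intros Hf Hg. apply continuity_pt_filterlim in Hf. apply continuity_pt_filterlim in Hg.
  apply continuity_pt_filterlim.
  apply continuity_pt_ext with (fun y => (f y + g y - Rabs (f y - g y)) * / 2).
  - intros y.
    unfold Rmin. destruct (Rle_dec (f y) (g y)).
    + rewrite Rabs_left1 by lra. field.
    + rewrite Rabs_right by lra. field.
  - apply continuity_pt_mult. 2: apply continuity_pt_const; intros u v; reflexivity.
    apply continuity_pt_minus. apply continuity_pt_plus; auto.
    apply (continuity_pt_comp (fun y => f y - g y) Rabs).
    apply continuity_pt_minus; auto. apply Rcontinuity_abs.
Qed.

Lemma rpow_cont s x : 0 < s -> continuous (fun y => rpow y s) x.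
Proof.
  intros Hs. destruct (Rlt_le_dec 0 x) as [Hx|Hx].
  - apply continuous_ext_loc with (fun y => Rpower y s).
    + apply locally_interval with 0 p_infty; simpl; auto.
      intros y Hy _. rewrite rpow_pos; auto.
    + apply (@ex_derive_continuous R_AbsRing R_NormedModule). exists (s * Rpower x (s - 1)).
      apply is_derive_Reals. apply derivable_pt_lim_power. auto.
  - destruct (Rlt_le_dec x 0) as [Hx'|Hx'].
    + apply continuous_ext_loc with (fun _ => 0).
      * apply locally_interval with m_infty 0; simpl; auto.
        intros y _ Hy. rewrite rpow_nonpos; auto. lra.
      * apply continuous_const.
    + assert (x = 0) by lra. subst x.
      apply filterlim_locally. intros eps.
      assert (Hd : 0 < Rpower eps (/ s)) by (unfold Rpower; apply exp_pos).
      exists (mkposreal _ Hd). intros y Hy.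
      change (Rabs (y - 0) < Rpower eps (/ s)) in Hy.
      change (Rabs (rpow y s - rpow 0 s) < eps).
      rewrite (rpow_nonpos 0) by lra. rewrite Rminus_0_r.
      destruct (Rle_lt_dec y 0) as [Hy0|Hy0].
      * rewrite rpow_nonpos by auto. rewrite Rabs_R0. apply cond_pos.
      * rewrite rpow_pos by auto. rewrite Rminus_0_r in Hy.
        rewrite Rabs_right in Hy by lra.
        rewrite Rabs_right by (left; unfold Rpower; apply exp_pos).
        replace (pos eps) with (Rpower (Rpower eps (/ s)) s).
        apply Rlt_Rpower_l; auto.
        rewrite Rpower_mult. rewrite Rinv_l by lra. apply Rpower_1. apply cond_pos.
Qed.

Lemma piece_cont s th n x : 0 < s -> continuous (piece s th n) x.
Proof.
  intros Hs. apply continuous_ext with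
    (fun xi => rpow (Rmin (Rmin (xi - a th n) (npow n (- th)))
                               (a th n + 3 * npow n (- th) - xi)) s).
  { intros y. rewrite piece_min. reflexivity. }
  apply continuous_comp with (g := fun y => rpow y s).
  2: apply rpow_cont; auto.
  apply continuous_Rmin_comp. apply continuous_Rmin_comp.
  apply (continuous_minus (fun y => y) (fun _ => a th n)). apply continuous_id. apply continuous_const.
  apply continuous_const.
  apply (continuous_minus (fun _ => a th n + 3 * npow n (- th)) (fun y => y)). apply continuous_const. apply continuous_id.
Qed.

Lemma rpow_nonneg x s : 0 <= rpow x s.
Proof. unfold rpow. destruct Rle_dec. lra. left; unfold Rpower; apply exp_pos. Qed.

Lemma piece_bound s th n xi : 0 < s ->
  0 <= piece s th n xi <= Rpower (npow n (- th)) s.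
Proof.
  intros Hs. rewrite piece_min. split. apply rpow_nonneg.
  set (m := Rmin _ _).
  assert (Hm : m <= npow n (- th)).
  { unfold m. eapply Rle_trans. apply Rmin_l. apply Rmin_r. }
  pose proof (npow_pos n (- th)).
  destruct (Rle_lt_dec m 0).
  - rewrite rpow_nonpos by auto. left; unfold Rpower; apply exp_pos.
  - rewrite rpow_pos by auto. apply Rle_Rpower_l; lra.
Qed.

Lemma w_cont s th xi : 0 < s -> 1 < th -> continuous (w s th) xi.
Proof.
  intros Hs Hth.
  destruct (Rlt_le_dec xi (a th 2)) as [H1|H1].
  { apply continuous_ext_loc with (fun _ => 0).
    - apply locally_interval with m_infty (a th 2); simpl; auto.
      intros y _ Hy. rewrite w_out; auto.
    - apply continuous_const. }
  destruct (Rlt_le_dec xi (ainf th)) as [H2|H2].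
  { destruct (nsel_spec th xi Hth (conj H1 H2)) as [Hn Hxi].
    set (n := nsel th xi) in *.
    destruct n as [|m]; [lia|].
    apply continuous_ext_loc with (piece s th (S m)).
    - apply locally_interval with (a th (S m) - npow m (- th)) (a th (S (S m))); simpl.
      + pose proof (npow_pos m (- th)). lra.
      + lra.
      + intros y Hy1 Hy2. symmetry. apply local_rep; auto. lia.
    - apply piece_cont; auto. }
  destruct (Rlt_le_dec (ainf th) xi) as [H3|H3].
  { apply continuous_ext_loc with (fun _ => 0).
    - apply locally_interval with (ainf th) p_infty; simpl; auto.
      intros y Hy _. rewrite w_out; auto. lra.
    - apply continuous_const. }
  assert (xi = ainf th) by lra. subst xi.
  apply filterlim_locally. intros eps.
  set (d := Rpower eps (/ s)).
  assert (Hd : 0 < d) by (unfold d, Rpower; apply exp_pos).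
  destruct (a_tends th (ainf th - d) Hth ltac:(lra)) as [N HN].
  set (M := (N + 2)%nat).
  assert (HM : ainf th - d < a th M) by (pose proof (a_mono th N M ltac:(unfold M; lia)); lra).
  pose proof (a_lt_ainf th M Hth).
  assert (Hdl : 0 < ainf th - a th M) by lra.
  exists (mkposreal _ Hdl). intros y Hy.
  change (Rabs (y - ainf th) < ainf th - a th M) in Hy.
  change (Rabs (w s th y - w s th (ainf th)) < eps).
  rewrite (w_out s th (ainf th)) by lra. rewrite Rminus_0_r.
  apply Rabs_def2 in Hy.
  destruct (Rlt_le_dec y (ainf th)) as [Hy1|Hy1].
  2: { rewrite w_out by lra. rewrite Rabs_R0. apply cond_pos. }
  assert (HM2 : a th 2 <= a th M) by (apply a_mono; unfold M; lia).
  destruct (nsel_spec th y Hth ltac:(lra)) as [Hn Hyn].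
  set (n := nsel th y) in *.
  rewrite (w_eq s th y n) by auto.
  assert (HMn : (M <= n)%nat).
  { destruct (Nat.le_gt_cases M n) as [?|HH]; auto.
    pose proof (a_mono th (S n) M HH). lra. }
  pose proof (a_mono th M n HMn) as Ha1.
  pose proof (a_lt_ainf th (S n) Hth) as Ha2.
  rewrite (a_S th n) in Hyn, Ha2 by lia.
  pose proof (npow_pos n (- th)) as Hp.
  destruct (piece_bound s th n y Hs) as [Hb1 Hb2].
  rewrite Rabs_right by lra.
  eapply Rle_lt_trans. apply Hb2.
  replace (pos eps) with (Rpower d s).
  apply Rlt_Rpower_l; auto. lra.
  unfold d. rewrite Rpower_mult. rewrite Rinv_l by lra. apply Rpower_1. apply cond_pos.
Qed.

Lemma loc_C1 (f g D : R -> R) xi l r : l < xi < r ->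
  (forall y, l < y < r -> f y = g y) ->
  (forall y, l < y < r -> is_derive g y (D y)) ->
  ex_derive D xi ->
  ex_derive f xi /\ continuous (Derive f) xi.
Proof.
  intros Hxi Hfg Hd HD.
  assert (Hf : forall y, l < y < r -> is_derive f y (D y)).
  { intros y Hy. apply is_derive_ext_loc with g; [|apply Hd; auto].
    apply locally_interval with l r; simpl; try lra.
    intros t Ht1 Ht2. symmetry. apply Hfg; lra. }
  split. exists (D xi). apply Hf; auto.
  apply continuous_ext_loc with D.
  - apply locally_interval with l r; simpl; try lra.
    intros t Ht1 Ht2. symmetry. apply is_derive_unique. apply Hf; lra.
  - apply (@ex_derive_continuous R_AbsRing R_NormedModule). exact HD.
Qed.

Lemma loc_const (f : R -> R) c xi l r : l < xi < r ->
  (forall y, l < y < r -> f y = c) ->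
  ex_derive f xi /\ continuous (Derive f) xi.
Proof.
  intros Hxi Hf. apply (loc_C1 f (fun _ => c) (fun _ => 0) xi l r); auto.
  intros y _. auto_derive; auto. auto_derive; auto.
Qed.

Lemma le_neq_lt x y : x <= y -> y <> x -> x < y.
Proof. intros [H|H] H'; auto. congruence. Qed.

Lemma w_C1 s th xi : 0 < s -> 1 < th -> ~ Ptheta th xi ->
  ex_derive (w s th) xi /\ continuous (Derive (w s th)) xi.
Proof.
  intros Hs Hth HP.
  destruct (Rlt_le_dec xi (a th 2)) as [H1|H1].
  { apply (loc_const _ 0 xi (xi - 1) (a th 2)). lra.
    intros y Hy. apply w_out. lra. }
  destruct (Rlt_le_dec xi (ainf th)) as [H2|H2].
  2: { destruct (Rlt_le_dec (ainf th) xi) as [H3|H3].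
       - apply (loc_const _ 0 xi (ainf th) (xi + 1)). lra.
         intros y Hy. apply w_out. lra.
       - exfalso. apply HP. right. lra. }
  destruct (nsel_spec th xi Hth (conj H1 H2)) as [Hn Hxi].
  set (n := nsel th xi) in *.
  assert (Hk : forall k, (k <= 3)%nat -> xi <> a th n + INR k * npow n (- th)).
  { intros k Hk E. apply HP. left. split. lra. exists n, k. auto. }
  pose proof (Hk 0%nat ltac:(lia)) as K0. pose proof (Hk 1%nat ltac:(lia)) as K1.
  pose proof (Hk 2%nat ltac:(lia)) as K2. pose proof (Hk 3%nat ltac:(lia)) as K3.
  simpl INR in K0, K1, K2, K3.
  replace (a th n + 0 * npow n (- th)) with (a th n) in K0 by ring.
  replace (a th n + 1 * npow n (- th)) with (a th n + npow n (- th)) in K1 by ring.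
  replace (a th n + (1 + 1) * npow n (- th)) with (a th n + 2 * npow n (- th)) in K2 by ring.
  replace (a th n + (1 + 1 + 1) * npow n (- th)) with (a th n + 3 * npow n (- th)) in K3 by ring.
  destruct Hxi as [Hx0 Hx4]. apply le_neq_lt in Hx0; [|auto].
  set (h := npow n (- th)) in *. set (an := a th n) in *.
  assert (Hh : 0 < h) by apply npow_pos.
  assert (HS : a th (S n) = an + 4 * h) by (apply a_S; lia).
  assert (Hw : forall y, an <= y < an + 4 * h -> w s th y = piece s th n y).
  { intros y Hy. apply w_eq; auto. fold an. lra. }
  destruct (Rlt_le_dec xi (an + h)) as [C1|C1].
  { apply (loc_C1 _ (fun y => exp (s * ln (y - an)))
       (fun y => s * / (y - an) * exp (s * ln (y - an))) xi an (an + h)).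
    - lra.
    - intros y Hy. rewrite Hw by lra. unfold piece. fold an h.
      destruct (Rlt_dec y (an + h)); [|lra]. rewrite rpow_pos by lra. reflexivity.
    - intros y Hy. auto_derive. lra. unfold Rminus; ring.
    - auto_derive. repeat split; lra. }
  apply le_neq_lt in C1; [|auto].
  destruct (Rlt_le_dec xi (an + 2 * h)) as [C2|C2].
  { apply (loc_const _ (npow n (- th * s)) xi (an + h) (an + 2 * h)). lra.
    intros y Hy. rewrite Hw by lra. unfold piece. fold an h.
    destruct (Rlt_dec y (an + h)); [lra|].
    destruct (Rlt_dec y (an + 2 * h)); [reflexivity|lra]. }
  apply le_neq_lt in C2; [|auto].
  destruct (Rlt_le_dec xi (an + 3 * h)) as [C3|C3].
  { apply (loc_C1 _ (fun y => exp (s * ln (an + 3 * h - y)))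
       (fun y => - (s * / (an + 3 * h - y) * exp (s * ln (an + 3 * h - y)))) xi (an + 2 * h) (an + 3 * h)).
    - lra.
    - intros y Hy. rewrite Hw by lra. unfold piece. fold an h.
      destruct (Rlt_dec y (an + h)); [lra|].
      destruct (Rlt_dec y (an + 2 * h)); [lra|].
      destruct (Rlt_dec y (an + 3 * h)); [|lra].
      rewrite rpow_pos by lra. reflexivity.
    - intros y Hy. auto_derive. lra. unfold Rminus; ring.
    - auto_derive. repeat split; lra. }
  apply le_neq_lt in C3; [|auto].
  { apply (loc_const _ 0 xi (an + 3 * h) (an + 4 * h)).
    - rewrite HS in Hx4. lra.
    - intros y Hy. rewrite Hw by lra. unfold piece. fold an h.
      destruct (Rlt_dec y (an + h)); [lra|].
      destruct (Rlt_dec y (an + 2 * h)); [lra|].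
      destruct (Rlt_dec y (an + 3 * h)); [lra|]. reflexivity. }
Qed.

Lemma Rpower_gamma b e g :
  Rpower b (g * e) = Rpower (Rpower b e) (g - 1) * Rpower b e.
Proof.
  rewrite Rpower_mult, <- Rpower_plus. f_equal. ring.
Qed.

Lemma rpow_gamma x s g : rpow x (g * s) = rpow (rpow x s) (g - 1) * rpow x s.
Proof.
  destruct (Rle_lt_dec x 0).
  - rewrite !(rpow_nonpos x) by auto. ring.
  - rewrite !(rpow_pos x) by auto. rewrite rpow_pos by (unfold Rpower; apply exp_pos).
    apply Rpower_gamma.
Qed.

Lemma piece_gamma s th n xi g :
  piece (g * s) th n xi = rpow (piece s th n xi) (g - 1) * piece s th n xi.
Proof.
  unfold piece.
  destruct Rlt_dec. apply rpow_gamma.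
  destruct Rlt_dec.
  { rewrite rpow_pos by apply npow_pos. unfold npow.
    replace (- th * (g * s)) with (g * (- th * s)) by ring. apply Rpower_gamma. }
  destruct Rlt_dec. apply rpow_gamma.
  rewrite rpow_nonpos by lra. ring.
Qed.

Lemma w_gamma s th xi g :
  w (g * s) th xi = rpow (w s th xi) (g - 1) * w s th xi.
Proof.
  unfold w. destruct Rle_dec; [|rewrite rpow_nonpos by lra; ring].
  destruct Rlt_dec; [|rewrite rpow_nonpos by lra; ring].
  apply piece_gamma.
Qed.

Lemma w_bound s th xi : 0 < s -> 1 < th -> 0 <= w s th xi <= Rpower 2 (- s * th).
Proof.
  intros Hs Hth.
  assert (H2 : 0 < Rpower 2 (- s * th)) by (unfold Rpower; apply exp_pos).
  destruct (Rlt_le_dec xi (a th 2)) as [H1|H1].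
  { rewrite w_out by auto. lra. }
  destruct (Rlt_le_dec xi (ainf th)) as [H3|H3].
  2: { rewrite w_out by auto. lra. }
  destruct (nsel_spec th xi Hth (conj H1 H3)) as [Hn Hxi].
  rewrite (w_eq s th xi (nsel th xi)) by auto.
  set (n := nsel th xi) in *.
  destruct (piece_bound s th n xi Hs) as [B1 B2]. split; auto.
  eapply Rle_trans. apply B2. unfold npow. rewrite Rpower_mult.
  replace (- th * s) with (- (s * th)) by ring.
  replace (- s * th) with (- (s * th)) by ring.
  rewrite !Rpower_Ropp. apply Rinv_le_contravar. unfold Rpower; apply exp_pos.
  apply Rle_Rpower_l. assert (0 < s * th) by nra. lra.
  split. lra. replace 2 with (INR 2) by (simpl; ring). apply le_INR. auto.
Qed.

Lemma w_support s th xi : in_support (w s th) xi -> 4 <= xi <= 4 * zeta th.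
Proof.
  intros H. split.
  - destruct (Rlt_le_dec xi 4) as [H1|H1]; auto.
    destruct (H (4 - xi) ltac:(lra)) as [y [Hy Hw]].
    apply Rabs_def2 in Hy. exfalso. apply Hw. apply w_out. rewrite a_2. lra.
  - destruct (Rlt_le_dec (4 * zeta th) xi) as [H1|H1]; auto.
    destruct (H (xi - 4 * zeta th) ltac:(lra)) as [y [Hy Hw]].
    apply Rabs_def2 in Hy. exfalso. apply Hw. apply w_out. unfold ainf. lra.
Qed.

Definition enumP th (m : nat) : R :=
  match m with
  | O => ainf th
  | S m' => a th (m' / 4) + INR (m' mod 4) * npow (m' / 4) (- th)
  end.

Lemma enumP_ok th xi : Ptheta th xi -> exists k, enumP th k = xi.
Proof.
  intros [[_ [n [k [Hn [Hk E]]]]]|E].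
  - exists (S (4 * n + k)).
    change (a th ((4 * n + k) / 4) + INR ((4 * n + k) mod 4) * npow ((4 * n + k) / 4) (- th) = xi).
    rewrite <- (Nat.div_unique (4 * n + k) 4 n k) by lia.
    rewrite <- (Nat.mod_unique (4 * n + k) 4 n k) by lia. auto.
  - exists O. simpl. auto.
Qed.

Theorem lemma2p1 (sigma theta : R) (Hsigma : 0 < sigma) (Htheta : 1 < theta) :
  (* (i) continuity, and compact support contained in [4, 4 zeta(theta)] *)
  ((forall xi : R, continuous (w sigma theta) xi) /\
   (forall xi : R, in_support (w sigma theta) xi -> 4 <= xi <= 4 * zeta theta)) /\
  (* (ii) P_theta countable; w is C^1 on R \ P_theta *)
  ((exists f : nat -> R, forall xi, Ptheta theta xi -> exists k : nat, f k = xi) /\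
   (forall xi : R, ~ Ptheta theta xi ->
      ex_derive (w sigma theta) xi /\ continuous (Derive (w sigma theta)) xi)) /\
  (* (iii) *)
  (forall gamma : R, 0 < gamma -> forall xi : R,
      w (gamma * sigma) theta xi
      = rpow (w sigma theta xi) (gamma - 1) * w sigma theta xi) /\
  (* (iv) *)
  (forall xi : R, 0 <= w sigma theta xi <= Rpower 2 (- sigma * theta)).
Proof.
  split; [split|split; [split|split]].
  - intros xi. apply w_cont; auto.
  - intros xi. apply w_support.
  - exists (enumP theta). apply enumP_ok.
  - intros xi H. apply w_C1; auto.
  - intros g _ xi. apply w_gamma.
  - intros xi. apply w_bound; auto.
Qed.
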